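(* Let $t_{kl}\ge0$ for $(k,l)\neq(0,0)$, let $\mathcal{G}=\sum_{k,l}t_{kl}\mathcal{L}_{kl}$ and $\Phi=e^{\mathcal{G}}\in\mathcal{A}_N^Q$. Then $\mathcal{D}_h(\mathcal{G})=\sum_{k=1}^{N-1}t_k\mathcal{K}_k$ with $t_k=\sum_lt_{kl}$, and $$\mathcal{D}_h\big(e^{\mathcal{G}}\big)=e^{\mathcal{D}_h(\mathcal{G})}=\exp\Big(\sum_{k=1}^{N-1}t_k\mathcal{K}_k\Big);$$ in particular the circulant bistochastic matrix $\mathcal{D}_h(\Phi)$ belongs to $\mathcal{A}_N^C$ (hyper-decoherence commutes with the semigroup time evolution).
   Context: Let $N\ge2$, $\omega=e^{2\pi i/N}$, $X|j\rangle=|j\oplus1\rangle$ (addition mod $N$), $Z=\mathrm{diag}(1,\omega,\dots,\omega^{N-1})$, Weyl unitaries $U_{kl}=X^kZ^l$. Superoperators are $N^2\times N^2$ matrices acting on $|A\rangle\rangle=\sum A_{ij}|i\rangle|j\rangle$ ($\rho\mapsto K\rho K^\dagger$ corresponds to $K\otimes\overline K$). $\mathcal{L}_{kl}=U_{kl}\otimes\overline{U}_{kl}-\mathbb{I}_{N^2}$; $\mathcal{A}_N^Q$ is the set of $\exp(\sum_{(k,l)\ne(0,0)}t_{kl}\mathcal{L}_{kl})$ with $t_{kl}\ge0$. Hyper-decoherence of a superoperator $M$ is the $N\times N$ matrix $\mathcal{D}_h(M)_{ij}=\langle ii|M|jj\rangle$. $\mathcal{K}_k=X^k-\mathbb{I}_N$,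 and $\mathcal{A}_N^C$ is the set of $\exp(\sum_{k=1}^{N-1}t_k\mathcal{K}_k)$ with $t_k\ge0$. *)

(* Defs.v *)
From HB Require Import structures.
From mathcomp Require Import all_boot all_order all_algebra.
From mathcomp Require Import reals topology normedtype sequences exp trigo.
From mathcomp Require Import complex mxtens.
Set Implicit Arguments.
Unset Strict Implicit.
Unset Printing Implicit Defensive.
Import Order.TTheory GRing.Theory Num.Theory.
Import numFieldTopology.Exports numFieldNormedType.Exports.
Local Open Scope ring_scope.
Local Open Scope complex_scope.

Section Defs.
Variable R : realType.
Local Notation C := R[i].

Definition omega (N : nat) : C :=
  cos (2 * pi / N%:R) +i* sin (2 * pi / N%:R).

Definition shiftX (N : nat) : 'M[C]_N :=
  \matrix_(i, j) ((i : nat) == (j.+1 %% N)%N)%:R.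

Definition clockZ (N : nat) : 'M[C]_N :=
  \matrix_(i, j) (((i : nat) == j)%:R * omega N ^+ i).

(* matrix powers for arbitrary (possibly non-.+1) dimension *)
Definition mpow (n : nat) (A : 'M[C]_n) (k : nat) : 'M[C]_n :=
  iter k (mulmx A) 1%:M.

Definition weylU (N k l : nat) : 'M[C]_N :=
  mpow (shiftX N) k *m mpow (clockZ N) l.

Definition mconj (n m : nat) (A : 'M[C]_(n, m)) : 'M[C]_(n, m) :=
  map_mx (@conjc R) A.

(* superoperator of rho |-> K rho K^dagger : K (x) conj(K), acting on
   |A>> = sum A_ij |i>|j>, with |i>|j> at index mxtens_index (i, j) *)
Definition superop (N : nat) (K : 'M[C]_N) : 'M[C]_(N * N) :=
  tensmx K (mconj K).

Definition lindL (N k l : nat) : 'M[C]_(N * N) :=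
  superop (weylU N k l) - 1%:M.

Definition classK (N k : nat) : 'M[C]_N := mpow (shiftX N) k - 1%:M.

Definition hyperdec (N : nat) (M : 'M[C]_(N * N)) : 'M[C]_N :=
  \matrix_(i, j) M (mxtens_index (i, i)) (mxtens_index (j, j)).

Definition expPartial (n : nat) (A : 'M[C]_n) (m : nat) : 'M[C]_n :=
  \sum_(k < m) (k`!%:R)^-1 *: mpow A k.

(* matrix exponential: entrywise limit of the partial sums, taken
   separately on real and imaginary parts (R[i] = R x R) *)
Definition mexp (n : nat) (A : 'M[C]_n) : 'M[C]_n :=
  \matrix_(i, j)
    (limn (fun m => complex.Re (expPartial A m i j)) +i*
     limn (fun m => complex.Im (expPartial A m i j))).

Definition quantumGen (N : nat) (t : nat -> nat -> R) : 'M[C]_(N * N) :=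
  \sum_(k < N) \sum_(l < N | ((k != 0 :> nat) || (l != 0 :> nat)))
     (t k l)%:C *: lindL N k l.

Definition classicalGen (N : nat) (t : nat -> R) : 'M[C]_N :=
  \sum_(1 <= k < N) (t k)%:C *: classK N k.

Definition inAC (N : nat) (P : 'M[C]_N) : Prop :=
  exists t : nat -> R, (forall k : nat, 0 <= t k) /\ P = mexp (classicalGen N t).

End Defs.

(* Main.v *)
Require Import Defs.
From HB Require Import structures.
From mathcomp Require Import all_boot all_order all_algebra.
From mathcomp Require Import reals topology normedtype sequences exp trigo.
From mathcomp Require Import complex mxtens.
From mathcomp Require Import boolp.
Import Order.TTheory GRing.Theory Num.Theory.
Local Open Scope ring_scope.
Local Open Scope complex_scope.
Section S.
Variable R : realType.
Local Notation C := R[i].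

Lemma omegaJ (N : nat) : omega R N * (omega R N)^* = 1.
Proof.
rewrite /omega /=. apply/eqP; rewrite eq_complex /=.
by rewrite mulrN opprK -!expr2 cos2Dsin2 eqxx /= mulrN mulrC addNr.
Qed.

Variable N : nat.
Hypothesis N0 : (0 < N)%N.

Local Notation idx := (@mxtens_index N N).

Definition dpres (M : 'M[C]_(N * N)) :=
  forall j a b : 'I_N, a != b -> M (idx (a, b)) (idx (j, j)) = 0.

Lemma mul_diag (A B : 'M[C]_(N * N)) r (j : 'I_N) : dpres B ->
  (A *m B) r (idx (j, j)) = \sum_(c < N) A r (idx (c, c)) * B (idx (c, c)) (idx (j, j)).
Proof.
move=> dB; rewrite !mxE.
rewrite (reindex (@mxtens_index N N)) /=; last first.
  by exists (@mxtens_unindex N N) => x _; rewrite ?mxtens_indexK ?mxtens_unindexK.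
rewrite (eq_bigr (fun p : 'I_N * 'I_N => (fun a b => A r (idx (a, b)) * B (idx (a, b)) (idx (j, j))) p.1 p.2)); last by case.
rewrite -(pair_bigA _ (fun a b => A r (idx (a, b)) * B (idx (a, b)) (idx (j, j)))) /=.
apply: eq_bigr => a _; rewrite (bigD1 a) //= big1 ?addr0 // => b hb.
by rewrite dB ?mulr0 // eq_sym.
Qed.

Lemma hd_mul A B : dpres B -> hyperdec (A *m B) = hyperdec A *m hyperdec B.
Proof.
move=> dB; apply/matrixP => i j; rewrite [LHS]mxE mul_diag // mxE.
by apply: eq_bigr => c _; rewrite !mxE.
Qed.

Lemma dpres_mul A B : dpres A -> dpres B -> dpres (A *m B).
Proof.
move=> dA dB j a b hab; rewrite mul_diag // big1 // => c _.
by rewrite dA ?mul0r.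
Qed.

Lemma dpres1 : dpres 1%:M.
Proof.
move=> j a b hab; rewrite mxE.
rewrite (inj_eq (can_inj (@mxtens_indexK N N))) xpair_eqE.
have [Eaj|] := eqP; last by []. by rewrite -Eaj eq_sym (negbTE hab).
Qed.

Lemma dpres0 : dpres 0.
Proof. by move=> j a b _; rewrite mxE. Qed.

Lemma dpresD A B : dpres A -> dpres B -> dpres (A + B).
Proof. by move=> dA dB j a b h; rewrite mxE dA // dB // addr0. Qed.

Lemma dpresN A : dpres A -> dpres (- A).
Proof. by move=> dA j a b h; rewrite mxE dA // oppr0. Qed.

Lemma dpresZ c A : dpres A -> dpres (c *: A).
Proof. by move=> dA j a b h; rewrite mxE dA // mulr0. Qed.

Lemma hd1 : hyperdec 1%:M = 1%:M :> 'M[C]_N.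
Proof.
apply/matrixP => i j; rewrite !mxE.
by rewrite (inj_eq (can_inj (@mxtens_indexK N N))) xpair_eqE andbb.
Qed.

Lemma hdD A B : hyperdec (A + B) = hyperdec A + hyperdec B :> 'M[C]_N.
Proof. by apply/matrixP => i j; rewrite !mxE. Qed.
Lemma hd0 : hyperdec 0 = 0 :> 'M[C]_N.
Proof. by apply/matrixP => i j; rewrite !mxE. Qed.
Lemma hdN A : hyperdec (- A) = - hyperdec A :> 'M[C]_N.
Proof. by apply/matrixP => i j; rewrite !mxE. Qed.
Lemma hdZ c A : hyperdec (c *: A) = c *: hyperdec A :> 'M[C]_N.
Proof. by apply/matrixP => i j; rewrite !mxE. Qed.

Lemma mpowS n (A : 'M[C]_n) k : mpow A k.+1 = A *m mpow A k.
Proof. by []. Qed.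

Lemma dpres_pow A k : dpres A -> dpres (mpow A k).
Proof. by move=> dA; elim: k => [|k IH]; [exact: dpres1 | rewrite mpowS; exact: dpres_mul]. Qed.

Lemma hd_pow A k : dpres A -> hyperdec (mpow A k) = mpow (hyperdec A) k.
Proof.
move=> dA; elim: k => [|k IH]; first exact: hd1.
by rewrite !mpowS hd_mul ?IH //; exact: dpres_pow.
Qed.

Lemma hd_exp A : dpres A -> hyperdec (mexp A) = mexp (hyperdec A).
Proof.
move=> dA; apply/matrixP => i j; rewrite !mxE.
have E m : expPartial A m (idx (i, i)) (idx (j, j)) = expPartial (hyperdec A) m i j.
  rewrite /expPartial !summxE; apply: eq_bigr => k _.
  by rewrite -hd_pow // !mxE.
have ER : (fun m => complex.Re (expPartial A m (idx (i, i)) (idx (j, j)))) = (fun m => complex.Re (expPartial (hyperdec A) m i j)) by apply: funext => m; rewrite E.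
have EI : (fun m => complex.Im (expPartial A m (idx (i, i)) (idx (j, j)))) = (fun m => complex.Im (expPartial (hyperdec A) m i j)) by apply: funext => m; rewrite E.
by rewrite ER EI.
Qed.


Lemma mpowX k (i j : 'I_N) : mpow (shiftX R N) k i j = ((i : nat) == (j + k) %% N)%N%:R.
Proof.
elim: k i => [|k IH] i.
  by rewrite /= !mxE addn0 modn_small.
rewrite mpowS !mxE.
have lt : ((j + k) %% N < N)%N by rewrite ltn_pmod.
rewrite (bigD1 (Ordinal lt)) //= big1 ?addr0.
  by rewrite !mxE IH /= eqxx mulr1 -addn1 modnDml addn1 addnS.
move=> r hr; rewrite IH mxE.
have -> : ((r : nat) == (j + k) %% N)%N = false.
  by apply/negbTE; apply: contra hr => /eqP E; apply/eqP/val_inj.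
by rewrite mulr0.
Qed.

Lemma mpowZ l (i j : 'I_N) :
  mpow (clockZ R N) l i j = ((i : nat) == j)%:R * (omega R N ^+ i) ^+ l.
Proof.
elim: l i => [|l IH] i.
  by rewrite /= !mxE expr0 mulr1.
rewrite mpowS !mxE (bigD1 i) //= big1 ?addr0.
  rewrite !mxE IH eqxx mul1r exprS.
  by rewrite mulrCA.
move=> r hr; rewrite mxE val_eqE eq_sym.
by rewrite (negbTE hr) mul0r mul0r.
Qed.

Lemma weylUE k l (i j : 'I_N) :
  weylU R N k l i j = ((i : nat) == (j + k) %% N)%N%:R * (omega R N ^+ j) ^+ l.
Proof.
rewrite /weylU mxE (bigD1 j) //= big1 ?addr0.
  by rewrite mpowX mpowZ eqxx mul1r.
by move=> r hr; rewrite mpowZ val_eqE (negbTE hr) mul0r mulr0.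
Qed.

Lemma superopE k l (a b j1 j2 : 'I_N) :
  superop (weylU R N k l) (idx (a, b)) (idx (j1, j2)) =
  weylU R N k l a j1 * @conjc R (weylU R N k l b j2).
Proof. rewrite /superop. by rewrite tensmxE; congr (_ * _); rewrite /mconj mxE. Qed.

Lemma dpres_superop k l : dpres (superop (weylU R N k l)).
Proof.
move=> j a b hab; rewrite superopE !weylUE.
have [Ea|] := eqP; last by rewrite !mul0r.
have [Eb|] := eqP; last by rewrite mul0r rmorph0 mulr0.
by case/eqP: hab; apply/val_inj; rewrite /= Ea Eb.
Qed.

Lemma hd_superop k l : hyperdec (superop (weylU R N k l)) = mpow (shiftX R N) k.
Proof.
apply/matrixP => i j; rewrite mxE superopE weylUE mpowX.
rewrite rmorphM /= mulrACA rmorphXn rmorphXn -exprMn -exprMn omegaJ !expr1n mulr1.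
by case: eqP => _; rewrite ?conjc1 ?conjc0 ?mulr1 ?mulr0.
Qed.

Lemma dpres_lind k l : dpres (lindL R N k l).
Proof. apply: dpresD; [exact: dpres_superop | apply: dpresN; exact: dpres1]. Qed.

Lemma hd_lind k l : hyperdec (lindL R N k l) = classK R N k.
Proof. by rewrite /lindL hdD hdN hd_superop hd1. Qed.

End S.
Local Close Scope complex_scope.
Theorem theorem3 (R : realType) (N : nat) (t : nat -> nat -> R) :
  (2 <= N)%N ->
  (forall k l : nat, (k < N)%N -> (l < N)%N ->
     ((k != 0)%N || (l != 0)%N) -> 0 <= t k l) ->
  let G := quantumGen N t in
  let tk := fun k : nat => \sum_(l < N) t k l in
  [/\ hyperdec G = classicalGen N tk,
      hyperdec (mexp G) = mexp (hyperdec G),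
      hyperdec (mexp G) = mexp (classicalGen N tk)
    & inAC (hyperdec (mexp G))].
Proof.
move=> N2 tpos G tk.
have N0 : (0 < N)%N by apply: ltnW.
have dG : dpres R N G.
  rewrite /G /quantumGen; apply: (big_ind (dpres R N)); [exact: dpres0 R N|exact: dpresD|].
  move=> k _; apply: (big_ind (dpres R N)); [exact: dpres0 R N|exact: dpresD|].
  by move=> l _; apply: dpresZ; apply: dpres_lind.
have H1 : hyperdec G = classicalGen N tk.
  rewrite /G /quantumGen (big_morph _ (@hdD R N) (@hd0 R N)).
  have K0 : classK R N 0 = 0 by rewrite /classK subrr.
  pose F k := ((tk k)%:C *: classK R N k)%C.
  transitivity (\sum_(k < N) F k).
    apply: eq_bigr => k _; rewrite (big_morph _ (@hdD R N) (@hd0 R N)).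
    under eq_bigr do rewrite hdZ hd_lind //.
    have [k0|kn0] := eqP.
      by rewrite /F k0 K0 scaler0 big1 // => l _; rewrite scaler0.
    rewrite (eq_bigl xpredT) // -scaler_suml /F /tk; congr (_ *: _).
    elim/big_rec2: _ => // i a b _ ->.
    by apply/eqP; rewrite eq_complex /= addr0 !eqxx.
  rewrite /classicalGen -(big_mkord xpredT F).
  rewrite (big_ltn N0) {1}/F K0 scaler0 add0r.
  by apply: eq_bigr.
have H2 : hyperdec (mexp G) = mexp (hyperdec G) by apply: hd_exp.
split; [exact: H1 | exact: H2 | by rewrite H2 H1 | ].
pose t' k := if (1 <= k < N)%N then tk k else 0.
exists t'; split.
  move=> k; rewrite /t'; case: ifP => [/andP [k1 kN]|]; last by move=> _; exact: lexx.
  apply: sumr_ge0 => l _; apply: tpos => //.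
  by rewrite -lt0n k1.
rewrite H2 H1; congr mexp.
by apply: eq_big_nat => k kr; rewrite /t' kr.
Qed.
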